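(* Let $P$ be a poset whose vertex set $V$ is a finite subset of $\mathbb{Z}_{>0}$ (with order $\prec$ unrelated to the integer order). Let $D(P)$ be the digraph on $V$ with an edge $u\to v$ iff $v\prec u$, and let $G(P)$ be the incomparability graph of $P$. Then $\Xi_{D(P)}(\mathbf{x},t)=X_{G(P)}(\mathbf{x},t)$.
   Context: $X_G(\mathbf{x},t)=\sum_\kappa t^{\mathrm{asc}(\kappa)}\prod_v x_{\kappa(v)}$ over proper colorings $\kappa:V\to\mathbb{Z}_{>0}$, with $\mathrm{asc}(\kappa)$ the number of edges $\{u,v\}$, $u<v$, $\kappa(u)<\kappa(v)$. The incomparability graph joins two distinct vertices iff they are incomparable in $P$. For a digraph $D$ on $V$ with $n=|V|$: a sequencing is a bijection $q:[n]\to V$; for a composition $\beta=(\beta_1,\dots,\beta_\ell)$ of $n$ put $B_i=\beta_1+\cdots+\beta_i$, $B_0=0$. An ordered path cover is a pair $(q,\beta)$ such that $q(B_{i-1}+1)\to\cdots\to q(B_i)$ is a directed path in $D$ for every $i$. $\mathrm{asc}(q)$ is the number of pairs $\{u,v\}$ with (1) either both $u\to v$ and $v\to u$ are edges or neither is, (2) $u<v$, (3) $v$ appears later than $u$ in $q$. $\Xi_D(\mathbf{x},t)=\sum_{(q,\beta)}t^{\mathrm{asc}(q)}M_\beta$ over ordered path covers, where $M_\beta=\sum_{i_1<\cdots<i_\ell}x_{i_1}^{\beta_1}\cdots x_{i_\ell}^{\beta_\ell}$. *)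

(* Defs.v *)
From HB Require Import structures.
From mathcomp Require Import all_boot all_order all_algebra.
From mathcomp Require Import mpoly.
Set Implicit Arguments. Unset Strict Implicit. Unset Printing Implicit Defensive.
Import GRing.Theory.
Local Open Scope ring_scope.

(* The coefficient ring: Z[t], with t the polynomial indeterminate 'X. *)
Notation Zt := {poly int}.

Section Defs.
Variables (T : finType) (lab : T -> nat).
(* [lab] identifies the vertex set with a finite subset of Z_{>0};
   "u < v" in the paper means (lab u < lab v)%N. *)

Definition digraph_of (prec : rel T) : rel T := fun u v => prec v u.

Definition incomp_graph (prec : rel T) : rel T :=
  fun u v => [&& u != v, ~~ prec u v & ~~ prec v u].

(* A colouring with colours in 'I_N; colour i stands for x_{i+1}. *)
Definition proper_col (G : rel T) (N : nat) (k : {ffun T -> 'I_N}) : bool :=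
  [forall u, forall v, G u v ==> (k u != k v)].

Definition asc_col (G : rel T) (N : nat) (k : {ffun T -> 'I_N}) : nat :=
  #|[set p : T * T | [&& G p.1 p.2, (lab p.1 < lab p.2)%N & (k p.1 < k p.2)%N]]|.

Definition chromX (G : rel T) (N : nat) : {mpoly Zt[N]} :=
  \sum_(k : {ffun T -> 'I_N} | proper_col G k)
     (('X : Zt) ^+ asc_col G k)%:MP * \prod_(v : T) 'X_(k v).

Definition psums (b : seq nat) (i : nat) : nat := sumn (take i b).

Definition is_comp (n : nat) (b : seq nat) : bool :=
  all (fun x => 0 < x)%N b && (sumn b == n).

(* (s, b) is an ordered path cover: positions are 0-based, so block i (0-based)
   occupies positions B_i, ..., B_{i+1} - 1, and consecutive entries in a block
   must be joined by an edge of D. *)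
Definition is_opc (n : nat) (D : rel T) (s : n.-tuple T) (b : seq nat) : bool :=
  [forall i : 'I_(size b), forall j : 'I_n, forall j' : 'I_n,
     [&& (j' == j.+1 :> nat), (psums b i <= j)%N & (j' < psums b i.+1)%N]
       ==> D (tnth s j) (tnth s j')].

Definition asc_seq (D : rel T) (s : seq T) : nat :=
  #|[set p : T * T |
      [&& (D p.1 p.2 && D p.2 p.1) || (~~ D p.1 p.2 && ~~ D p.2 p.1),
          (lab p.1 < lab p.2)%N &
          (index p.1 s < index p.2 s)%N]]|.

End Defs.

Definition monoM (N : nat) (b : seq nat) : {mpoly Zt[N]} :=
  \sum_(iota : (size b).-tuple 'I_N | sorted (fun a c : 'I_N => (a < c)%N) iota)
     \prod_(k < size b) 'X_(tnth iota k) ^+ nth 0%N b k.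

(* A sequencing is a bijection [n] -> V, i.e. a duplicate-free n-tuple with n = |V|;
   compositions of n have at most n parts, each at most n. *)
Definition XiD (T : finType) (lab : T -> nat) (D : rel T) (N : nat) : {mpoly Zt[N]} :=
  \sum_(s : #|T|.-tuple T | uniq s)
    \sum_(l < #|T|.+1)
      \sum_(b : l.-tuple 'I_(#|T|.+1) |
              is_comp #|T| (map val b) && is_opc D s (map val b))
        (('X : Zt) ^+ asc_seq lab D s)%:MP * monoM N (map val b).

(* Main.v *)
Require Import Defs.
From HB Require Import structures.
From mathcomp Require Import all_boot all_order all_algebra.
From mathcomp Require Import mpoly.
Set Implicit Arguments. Unset Strict Implicit. Unset Printing Implicit Defensive.

Definition expand {A : Type} (ps : seq (nat * A)) : seq A :=
  flatten [seq nseq p.1 p.2 | p <- ps].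
Definition cseq {A : Type} (bb : seq nat) (io : seq A) := expand (zip bb io).

Fixpoint rle (s : seq nat) : seq (nat * nat) :=
  match s with
  | [::] => [::]
  | x :: s' => match rle s' with
     | (m, y) :: r => if x == y then (m.+1, y) :: r else (1%N, x) :: (m, y) :: r
     | [::] => [:: (1%N, x)]
     end
  end.

Lemma rle_cons x s : rle (x :: s) = match rle s with
     | (m, y) :: r => if x == y then (m.+1, y) :: r else (1%N, x) :: (m, y) :: r
     | [::] => [:: (1%N, x)]
     end.
Proof. by []. Qed.

Lemma expand_cons A (p : nat * A) ps : expand (p :: ps) = nseq p.1 p.2 ++ expand ps.
Proof. by []. Qed.

Lemma rleK s : expand (rle s) = s.
Proof.
elim: s => [|x s IH] //=.
case E: (rle s) IH => [|[m y] r] IH; first by rewrite -IH.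
case: eqP => [->|_].
  by rewrite expand_cons /= -IH.
by rewrite expand_cons /= IH.
Qed.

Lemma rle_head s m y r : rle s = (m, y) :: r -> s = y :: behead s.
Proof.
case: s => [|x s] //=.
case: (rle s) => [|[m' y'] r'].
  by case=> _ <-.
case: eqP => [->|_]; first by case=> _ <-.
by case=> _ <-.
Qed.

Lemma rle_pos s : all (fun p => 0 < p.1) (rle s).
Proof.
elim: s => [|x s IH] //=.
case: (rle s) IH => [|[m y] r] //= /andP[Hm Hr].
by case: eqP => _ /=; rewrite ?Hr ?Hm.
Qed.

Lemma sorted_rle s : sorted leq s -> sorted ltn (map snd (rle s)).
Proof.
elim: s => [|x s IH] //= Hp.
have Hs : sorted leq s by apply: (path_sorted Hp).
move: (IH Hs).
case E: (rle s) => [|[m y] r] //=.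
case: eqP => [Hxy|Hxy] //= Hr.
rewrite Hr andbT.
move: (rle_head E) Hp => -> /= /andP[Hxy' _].
by rewrite ltn_neqAle Hxy' andbT; apply/eqP.
Qed.

Lemma rle_expand ps : all (fun p => 0 < p.1) ps -> sorted ltn (map snd ps) ->
  rle (expand ps) = ps.
Proof.
elim: ps => [|[m y] ps IH] //= /andP[Hm Hps] Hs.
have Hs' : sorted ltn (map snd ps) by apply: (path_sorted Hs).
have {}IH := IH Hps Hs'.
rewrite expand_cons.
case: m Hm => [|m] // _.
elim: m => [|m IHm].
  rewrite /= IH; case: ps Hs {IH Hps Hs'} => [|[m2 y2] r] //= /andP[Hlt _].
  by rewrite (ltn_eqF Hlt).
by rewrite [nseq _ _]/= cat_cons rle_cons IHm eqxx.
Qed.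

Lemma size_expand A (ps : seq (nat * A)) : size (expand ps) = sumn (map fst ps).
Proof. by elim: ps => [|p ps IH] //=; rewrite expand_cons size_cat size_nseq IH. Qed.

Lemma mem_expand (ps : seq (nat * nat)) p : p \in ps -> 0 < p.1 -> p.2 \in expand ps.
Proof.
elim: ps => [|q ps IH] //=; rewrite inE => /orP[/eqP<-|Hp] Hpos; rewrite expand_cons mem_cat.
  by case: (p.1) Hpos => [|k] //= _; rewrite inE eqxx.
by rewrite IH ?orbT.
Qed.

Lemma le_expand (A : eqType) (ps : seq (nat * A)) p : p \in ps -> p.1 <= size (expand ps).
Proof.
elim: ps => [|q ps IH] //=; rewrite inE => /orP[/eqP<-|Hp]; rewrite expand_cons size_cat size_nseq.
  exact: leq_addr.
by rewrite (leq_trans (IH Hp)) // leq_addl.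
Qed.

Lemma size_le_expand A (ps : seq (nat * A)) : all (fun p => 0 < p.1) ps ->
   size ps <= size (expand ps).
Proof.
elim: ps => [|q ps IH] //= /andP[Hq Hps]; rewrite expand_cons size_cat size_nseq.
by rewrite -add1n leq_add // IH.
Qed.

Lemma psums0 bb : psums bb 0 = 0. Proof. by rewrite /psums take0. Qed.
Lemma psumsS b bb i : psums (b :: bb) i.+1 = b + psums bb i.
Proof. by []. Qed.

Lemma psums_mono bb i i' : i <= i' -> psums bb i <= psums bb i'.
Proof.
elim: bb i i' => [|b bb IH] [|i] [|i'] //=; rewrite ?psums0 ?psumsS ?leq_addr //.
move=> H; rewrite leq_add2l; exact: IH.
Qed.

Lemma psums_size bb : psums bb (size bb) = sumn bb.
Proof. by rewrite /psums take_size. Qed.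

Lemma size_cseq A (bb : seq nat) (io : seq A) : size io = size bb -> size (cseq bb io) = sumn bb.
Proof.
move=> H; rewrite /cseq size_expand.
by rewrite -[in RHS](@unzip1_zip _ _ bb io) ?H.
Qed.

Lemma map_cseq A B (f : A -> B) bb io : map f (cseq bb io) = cseq bb (map f io).
Proof.
elim: bb io => [|b bb IH] [|x io] //=.
by rewrite /cseq /= !expand_cons map_cat map_nseq; congr (_ ++ _); exact: IH.
Qed.

Lemma nth_cseq A (x0 : A) bb io i j : size io = size bb -> i < size bb ->
  psums bb i <= j < psums bb i.+1 -> nth x0 (cseq bb io) j = nth x0 io i.
Proof.
elim: bb io i j => [|b bb IH] [|x io] i j //= [Hs].
rewrite /cseq /= expand_cons nth_cat size_nseq.
case: i => [|i] Hi.
  rewrite psums0 /= psumsS psums0 addn0 => Hjb.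
  by rewrite Hjb nth_nseq Hjb.
rewrite !psumsS => /andP[H1 H2].
have Hb : b <= j by apply: leq_trans H1; exact: leq_addr.
rewrite ltnNge Hb /=.
apply: IH => //.
by rewrite leq_subRL // ltn_subLR // H1 H2.
Qed.

Lemma block_exists bb j : j < sumn bb ->
  exists2 i, i < size bb & psums bb i <= j < psums bb i.+1.
Proof.
elim: bb j => [|b bb IH] j //= Hj.
case: (ltnP j b) => Hjb.
  by exists 0 => //; rewrite psums0 psumsS psums0 addn0.
have Hj' : j - b < sumn bb by rewrite ltn_subLR.
have [i Hi Hij] := IH _ Hj'.
exists i.+1 => //; rewrite !psumsS.
by move: Hij; rewrite leq_subRL // ltn_subLR.
Qed.

Definition okcN (E : nat -> bool) (cn : seq nat) : bool :=
  all (fun j => (nth 0 cn j <= nth 0 cn j.+1) && ((nth 0 cn j == nth 0 cn j.+1) ==> E j))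
      (iota 0 (size cn).-1).

Lemma okcNP (E : nat -> bool) cn : reflect (forall j, j.+1 < size cn ->
   (nth 0 cn j <= nth 0 cn j.+1) /\ ((nth 0 cn j = nth 0 cn j.+1) -> E j)) (okcN E cn).
Proof.
apply: (iffP allP) => H j.
  move=> Hj; have /H/andP[H1 H2] : j \in iota 0 (size cn).-1.
    by rewrite mem_iota /= add0n -ltnS prednK // (leq_ltn_trans _ Hj).
  by split => // Heq; move: H2; rewrite Heq eqxx.
rewrite mem_iota /= add0n => Hj.
have Hj' : j.+1 < size cn by case: (size cn) Hj => [|k] //.
have [H1 H2] := H j Hj'.
by rewrite H1 /=; apply/implyP => /eqP.
Qed.

Definition blockokP (E : nat -> bool) (bb : seq nat) :=
  forall i j, i < size bb -> psums bb i <= j -> j.+1 < psums bb i.+1 -> E j.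

Lemma psums_le_sumn bb i : psums bb i <= sumn bb.
Proof.
case: (leqP i (size bb)) => H; first by rewrite -psums_size psums_mono.
by rewrite /psums take_oversize // ltnW.
Qed.

Lemma CLN (E : nat -> bool) cn bb io : size io = size bb ->
 (all (fun x => 0 < x) bb /\ sorted ltn io /\ cn = cseq bb io /\ blockokP E bb) <->
 (okcN E cn /\ bb = map fst (rle cn) /\ io = map snd (rle cn)).
Proof.
move=> Hsz; split.
  move=> [Hpos [Hsort [Hcn Hblk]]].
  have Hps : rle cn = zip bb io.
    rewrite Hcn /cseq rle_expand //.
      by rewrite -(all_map fst (fun x => 0 < x)) -/(unzip1 _) unzip1_zip ?Hsz.
    by rewrite -/(unzip2 _) unzip2_zip ?Hsz.
  split; last first.
    by rewrite Hps -/(unzip1 _) -/(unzip2 _) unzip1_zip ?unzip2_zip ?Hsz.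
  apply/okcNP => j Hj.
  have Hsc : size cn = sumn bb by rewrite Hcn size_cseq.
  rewrite Hsc in Hj.
  have [i Hi Hij] := block_exists (ltnW Hj).
  have [i' Hi' Hij'] := block_exists Hj.
  have Hn : forall k, nth 0 cn k = nth 0 (cseq bb io) k by move=> k; rewrite Hcn.
  rewrite !Hn (nth_cseq _ Hsz Hi Hij) (nth_cseq _ Hsz Hi' Hij').
  have Hii' : i <= i'.
    rewrite leqNgt; apply/negP => Hlt.
    move: Hij Hij' => /andP[H1 _] /andP[_ H2].
    have := psums_mono bb Hlt; rewrite leqNgt => /negP; apply.
    by apply: leq_ltn_trans H1 _; apply: ltn_trans H2.
  case: (ltngtP i i') Hii' => // [Hlt|Heq] _.
    have := sorted_ltn_nth ltn_trans 0 Hsort; move/(_ i i').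
    rewrite !inE Hsz => /(_ Hi Hi' Hlt) Hv.
    by split; [exact: ltnW | move=> Heq; move: Hv; rewrite Heq ltnn].
  rewrite -Heq; split => // _; apply: (Hblk i) => //; first by case/andP: Hij.
  by move: Hij'; rewrite -Heq => /andP[].
move=> [Hok [Hbb Hio]].
have Hcn : cn = cseq bb io.
  by rewrite Hbb Hio /cseq -/(unzip1 _) -/(unzip2 _) zip_unzip rleK.
split; first by rewrite Hbb all_map; exact: rle_pos.
split.
  rewrite Hio; apply: sorted_rle; apply/(sortedP 0) => j Hj.
  by have [] := okcNP _ _ Hok j Hj.
split => // i j Hi H1 H2.
have Hsc : size cn = sumn bb by rewrite Hcn size_cseq.
have Hj1 : j.+1 < size cn by rewrite Hsc (leq_trans H2) // psums_le_sumn.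
have [_ ] := okcNP _ _ Hok j Hj1; apply.
rewrite Hcn (nth_cseq _ Hsz Hi (j := j)) ?H1 ?(ltn_trans _ H2) //.
by rewrite (nth_cseq _ Hsz Hi (j := j.+1)) ?H2 ?(leq_trans H1) ?andbT.
Qed.

Import GRing.Theory.

Lemma map_val_pmap K v : all (fun y => y < K) v ->
  map val (pmap (insub : nat -> option 'I_K) v) = v.
Proof.
elim: v => //= y v IH /andP[Hy Hv].
case: insubP => [u _ Hu|]; first by rewrite /= Hu IH.
by rewrite Hy.
Qed.

Lemma count_tuple K m (v : seq nat) :
  \sum_(x : m.-tuple 'I_K) nat_of_bool (map val x == v) =
  nat_of_bool ((size v == m) && all (fun y => y < K) v).
Proof.
case H: ((size v == m) && all (fun y => y < K) v); last first.
  apply: big1 => x; case E: (map val x == v) => //.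
  move: H; rewrite -(eqP E) size_map size_tuple eqxx /=.
  by move/negbT/negP; case; apply/allP => y /mapP[z _ ->].
case/andP: H => /eqP Hs Ha.
have Hs' : size (pmap (insub : nat -> option 'I_K) v) == m.
  by rewrite -(size_map val) map_val_pmap // Hs.
rewrite (bigD1 (Tuple Hs')) //= map_val_pmap // eqxx big1 // => x Hx.
case E: (map val x == v) => //; case/negP: Hx; apply/eqP/val_inj => /=.
by apply: (inj_map val_inj); rewrite map_val_pmap // (eqP E).
Qed.

Lemma sum_ord_eq n0 (k F : nat) :
  \sum_(l < n0) nat_of_bool (k == l :> nat) * F = nat_of_bool (k < n0) * F.
Proof.
case H: (k < n0).
  rewrite (bigD1 (Ordinal H)) //= big1 ?addn0 => [|l Hl]; first by rewrite /= eqxx.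
  case E: (k == l) => //; case/negP: Hl; apply/eqP/val_inj => /=; exact/esym/eqP.
apply: big1 => l; case E: (k == l) => //; move: H; by rewrite (eqP E) ltn_ord.
Qed.

Lemma sum_cond_nat (J : finType) (P : bool) (Q F : pred J) :
  (if P then \sum_(j | Q j) nat_of_bool (F j) else 0) =
  \sum_j nat_of_bool [&& P, Q j & F j].
Proof.
case: P; last by rewrite big1.
by rewrite big_mkcond; apply: eq_bigr => j _; case: (Q j).
Qed.

Lemma rle_facts cn : [/\ size (rle cn) <= size cn,
   all (fun p => p.1 <= size cn) (rle cn) & all (fun p => p.2 \in cn) (rle cn)].
Proof.
have E := rleK cn.
split.
- by have := size_le_expand (rle_pos cn); rewrite E.
- by apply/allP => p Hp; have := le_expand Hp; rewrite E.
- apply/allP => p Hp; have := @mem_expand (rle cn) p Hp; rewrite E; apply.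
  by move/allP: (rle_pos cn) => /(_ p Hp).
Qed.

Section S.
Variables (T : finType) (lab : T -> nat) (D : rel T).
Local Notation n := #|T|.

Definition edgeN (s : n.-tuple T) (j : nat) : bool :=
  [exists j0 : 'I_n, exists j1 : 'I_n,
     [&& (j0 == j :> nat), (j1 == j.+1 :> nat) & D (tnth s j0) (tnth s j1)]].

Lemma opcE (s : n.-tuple T) bb : sumn bb = n ->
  is_opc D s bb <-> blockokP (edgeN s) bb.
Proof.
move=> Hsum; split.
  move=> /forallP H i j Hi H1 H2.
  have Hj1 : j.+1 < n by rewrite -Hsum (leq_trans H2) // psums_le_sumn.
  have Hj : j < n by apply: ltnW.
  apply/existsP; exists (Ordinal Hj); apply/existsP; exists (Ordinal Hj1).
  rewrite !eqxx /=.
  move: (H (Ordinal Hi)) => /forallP/(_ (Ordinal Hj))/forallP/(_ (Ordinal Hj1)).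
  by rewrite /= eqxx H1 H2 => /implyP ->.
move=> H; apply/forallP => i; apply/forallP => j; apply/forallP => j'.
apply/implyP => /and3P[/eqP Hj' H1 H2].
have H2' : j.+1 < psums bb i.+1 by rewrite -Hj'.
have /existsP[j0 /existsP[j1 /and3P[/eqP E0 /eqP E1 HD]]] :=
  H i j (ltn_ord i) H1 H2'.
have -> : j = j0 by apply/val_inj.
have -> : j' = j1 by apply/val_inj; rewrite /= E1 Hj'.
exact: HD.
Qed.

Lemma summandE (N : nat) (s : n.-tuple T) l (b : l.-tuple 'I_n.+1)
  (io : (size (map val b)).-tuple 'I_N) (c : n.-tuple 'I_N) :
 [&& is_comp n (map val b) && is_opc D s (map val b),
     sorted (fun a c : 'I_N => (a < c)%N) io & (val c == cseq (map val b) io)]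
 = [&& okcN (edgeN s) (map val c), map val b == map fst (rle (map val c)) &
       map val io == map snd (rle (map val c))].
Proof.
set bb := map val b.
have Hsz : size (map val io) = size bb by rewrite size_map size_tuple.
have Hso : sorted (fun a c : 'I_N => (a < c)%N) io = sorted ltn (map val io).
  by rewrite sorted_map.
have Hc : (val c == cseq bb io) = (map val c == cseq bb (map val io)).
  by rewrite -map_cseq (inj_eq (inj_map val_inj)).
rewrite Hso Hc.
have HC := CLN (edgeN s) (map val c) Hsz.
apply/idP/idP.
  case/and3P => [/andP[/andP[Hpos /eqP Hsum] Hopc] Hsort /eqP Hcv].
  have [Hok [Hb Hi]] : okcN (edgeN s) (map val c) /\ bb = map fst (rle (map val c))
      /\ map val io = map snd (rle (map val c)).
    apply/HC; split => //; split => //; split => //.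
    by apply/opcE.
  by rewrite Hok -Hb -Hi !eqxx.
case/and3P => [Hok /eqP Hb /eqP Hi].
have [Hpos [Hsort [Hcv Hblk]]] := proj2 HC (conj Hok (conj Hb Hi)).
have Hsum : sumn bb = n.
  by rewrite -(size_cseq Hsz) -Hcv size_map size_tuple.
rewrite /is_comp Hpos Hsum eqxx Hsort Hcv eqxx /= andbT.
by apply/opcE.
Qed.

Lemma countE (N : nat) (s : n.-tuple T) (c : n.-tuple 'I_N) :
 \sum_(l < n.+1) \sum_(b : l.-tuple 'I_n.+1 | is_comp n (map val b) && is_opc D s (map val b))
   \sum_(io : (size (map val b)).-tuple 'I_N | sorted (fun a c : 'I_N => (a < c)%N) io)
      nat_of_bool (val c == cseq (map val b) io)
 = nat_of_bool (okcN (edgeN s) (map val c)).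
Proof.
set cn := map val c; set BB := map fst (rle cn); set IO := map snd (rle cn).
have [F1 F2 F3] := rle_facts cn.
have Hcn : size cn = n by rewrite size_map size_tuple.
have HIO : size IO = size BB by rewrite !size_map.
have AIO : all (fun y => y < N) IO.
  rewrite all_map; apply/allP => p Hp; move/allP: F3 => /(_ p Hp) /=.
  by rewrite /cn => /mapP[x _ ->]; apply: ltn_ord.
have ABB : all (fun y => y < n.+1) BB.
  rewrite all_map; apply/allP => p Hp; move/allP: F2 => /(_ p Hp) /=.
  by rewrite Hcn.
have SBB : size BB < n.+1 by rewrite size_map -Hcn.
transitivity (\sum_(l < n.+1) \sum_(b : l.-tuple 'I_n.+1)
   nat_of_bool (okcN (edgeN s) cn && (map val b == BB)) *
   nat_of_bool (size BB == size (map val b))).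
  apply: eq_bigr => l _; rewrite big_mkcond; apply: eq_bigr => b _.
  rewrite sum_cond_nat.
  under eq_bigr => io _ do rewrite summandE andbA -mulnb.
  rewrite -big_distrr /= count_tuple HIO AIO andbT.
  by [].
rewrite (eq_bigr (fun l : 'I_n.+1 => nat_of_bool (okcN (edgeN s) cn) * nat_of_bool (size BB == l :> nat))); last first.
  move=> l _.
  transitivity (\sum_(b : l.-tuple 'I_n.+1) nat_of_bool (okcN (edgeN s) cn) * nat_of_bool (map val b == BB)).
    apply: eq_bigr => b _.
    case E: (map val b == BB); last by rewrite andbF muln0.
    by rewrite (eqP E) eqxx andbT muln1.
  rewrite -big_distrr /= count_tuple ABB andbT.
  by rewrite eq_sym.
rewrite -big_distrr /=.
rewrite (eq_bigr (fun l : 'I_n.+1 => nat_of_bool (size BB == l :> nat) * 1)); last by move=> l _; rewrite muln1.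
by rewrite sum_ord_eq SBB; case: okcN.
Qed.
End S.

Import GRing.Theory.
Open Scope ring_scope.

Lemma prod_cseq_gen (R : comPzRingType) (A : Type) (F : A -> R) x0 bb (io : seq A) :
  size io = size bb ->
  \prod_(k < size bb) F (nth x0 io k) ^+ nth 0%N bb k = \prod_(x <- cseq bb io) F x.
Proof.
elim: bb io => [|b bb IH] [|x io] //= Hs.
  by rewrite big_ord0 /cseq big_nil.
case: Hs => Hs.
rewrite big_ord_recl /= /cseq /= expand_cons big_cat /= big_nseq iter_mulr_1.
congr (_ * _); exact: IH.
Qed.

Lemma monoM_cseq N bb : monoM N bb =
  \sum_(io : (size bb).-tuple 'I_N | sorted (fun a c : 'I_N => (a < c)%N) io)
     \prod_(x <- cseq bb io) 'X_x.
Proof.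
rewrite /monoM; apply: eq_bigr => io _.
case: bb io => [|b bb] io.
  by case: io => [[|x t] Ht] //; rewrite big_ord0 /cseq /expand /= big_nil.
rewrite -(prod_cseq_gen _ (tnth io ord0)); last by rewrite size_tuple.
by apply: eq_bigr => k _; rewrite [tnth io k](tnth_nth (tnth io ord0)).
Qed.

Lemma sum_tuple_eq (R : pzSemiRingType) (A : finType) m (v : seq A) (f : seq A -> R) :
  size v = m -> \sum_(c : m.-tuple A) (val c == v)%:R * f c = f v.
Proof.
move=> Hs; have Hs' : size v == m by apply/eqP.
rewrite (bigD1 (Tuple Hs')) //= eqxx mul1r big1 ?addr0 // => c Hc.
case E: (val c == v); last by rewrite mul0r.
by case/negP: Hc; apply/eqP/val_inj; rewrite /= (eqP E).
Qed.

Section S3.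
Variables (T : finType) (D : rel T).
Local Notation n := #|T|.

Lemma step2 N (s : n.-tuple T) :
 \sum_(l < n.+1) \sum_(b : l.-tuple 'I_n.+1 | is_comp n (map val b) && is_opc D s (map val b))
    monoM N (map val b)
 = \sum_(c : n.-tuple 'I_N | okcN (edgeN D s) (map val c)) \prod_(x <- c) 'X_x.
Proof.
set f := fun c : seq 'I_N => \prod_(x <- c) ('X_x : {mpoly Zt[N]}).
transitivity (\sum_(l < n.+1) \sum_(b : l.-tuple 'I_n.+1 | is_comp n (map val b) && is_opc D s (map val b))
  \sum_(io : (size (map val b)).-tuple 'I_N | sorted (fun a c : 'I_N => (a < c)%N) io)
  \sum_(c : n.-tuple 'I_N) (val c == cseq (map val b) io)%:R * f c).
  apply: eq_bigr => l _; apply: eq_bigr => b /andP[/andP[_ /eqP Hsum] _].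
  rewrite monoM_cseq; apply: eq_bigr => io _.
  by symmetry; apply: sum_tuple_eq; rewrite size_cseq // size_tuple.
transitivity (\sum_(c : n.-tuple 'I_N) \sum_(l < n.+1) \sum_(b : l.-tuple 'I_n.+1 | is_comp n (map val b) && is_opc D s (map val b))
  \sum_(io : (size (map val b)).-tuple 'I_N | sorted (fun a c : 'I_N => (a < c)%N) io)
  (val c == cseq (map val b) io)%:R * f c).
  rewrite exchange_big /=; apply: eq_bigr => l _.
  rewrite exchange_big /=; apply: eq_bigr => b _.
  by rewrite exchange_big.
rewrite [RHS]big_mkcond; apply: eq_bigr => c _.
have -> : (if okcN (edgeN D s) (map val c) then \prod_(x <- c) 'X_x else 0) =
   (nat_of_bool (okcN (edgeN D s) (map val c)))%:R * f c.
  by case: okcN; rewrite ?mul1r ?mul0r.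
rewrite -(countE D s c).
rewrite natr_sum mulr_suml; apply: eq_bigr => l _.
rewrite natr_sum mulr_suml; apply: eq_bigr => b _.
by rewrite natr_sum mulr_suml.
Qed.
End S3.

Close Scope ring_scope.

Import GRing.Theory.

Section S4.
Variables (T : finType) (lab : T -> nat) (prec : rel T).
Hypothesis Hirr : irreflexive prec.
Hypothesis Htr : transitive prec.
Local Notation n := #|T|.
Local Notation D := (digraph_of prec).
Local Notation G := (incomp_graph prec).
Variable N : nat.

Lemma prec_asym u v : prec u v -> ~~ prec v u.
Proof. move=> H; apply/negP => H'; by have := Hirr u; rewrite (Htr H H'). Qed.

Definition r (k : {ffun T -> 'I_N}) : rel T :=
  fun u v => (k u < k v)%N || ((k u == k v) && ~~ prec u v).

Lemma proper_cmp (k : {ffun T -> 'I_N}) u v : proper_col G k -> k u = k v -> u != v ->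
  prec u v || prec v u.
Proof.
move=> /forallP/(_ u)/forallP/(_ v)/implyP Hk Heq Huv.
case H: (prec u v || prec v u) => //.
have : G u v by rewrite /incomp_graph Huv; move/negbT/norP: H => [-> ->].
by move/Hk; rewrite Heq eqxx.
Qed.

Lemma r_total k : proper_col G k -> total (r k).
Proof.
move=> Hp u v; rewrite /r.
case: (ltngtP (k u) (k v)) => [_|_|Heq] //=; rewrite ?orbT //.
have Heq' : k u = k v by apply: val_inj.
rewrite Heq' eqxx /=.
case: (eqVneq u v) => [->|Huv]; first by rewrite Hirr.
by case/orP: (proper_cmp Hp Heq' Huv) => H; rewrite (prec_asym H) ?orbT.
Qed.

Lemma r_trans k : proper_col G k -> transitive (r k).
Proof.
move=> Hp y x z; rewrite /r.
case/orP => [H1|/andP[/eqP H1 H1']]; case/orP => [H2|/andP[/eqP H2 H2']].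
- by rewrite (ltn_trans H1 H2).
- by rewrite -H2 H1.
- by rewrite H1 H2.
rewrite H1 H2 eqxx ltnn /=.
case: (eqVneq y x) => [Eyx|Hyx]; first by rewrite -Eyx.
have Hxy : x != y by rewrite eq_sym.
case/orP: (proper_cmp Hp H1 Hxy) => H; first by rewrite H in H1'.
apply/negP => Hxz; move/negP: H2'; apply; exact: (Htr H Hxz).
Qed.

Lemma r_anti k : proper_col G k -> antisymmetric (r k).
Proof.
move=> Hp u v; rewrite /r => /andP[].
case/orP => [H1|/andP[/eqP H1 H1']]; case/orP => [H2|/andP[/eqP H2 H2']].
- by move: (ltn_trans H1 H2); rewrite ltnn.
- by move: H1; rewrite H2 ltnn.
- by move: H2; rewrite H1 ltnn.
case: (eqVneq u v) => // Huv.
by case/orP: (proper_cmp Hp H1 Huv) => H; [rewrite H in H1' | rewrite H in H2'].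
Qed.

Lemma size_sort_enum k : size (sort (r k) (enum T)) == n.
Proof. by rewrite size_sort -cardT. Qed.

Definition s0 k : n.-tuple T := Tuple (size_sort_enum k).

Definition kof (s : n.-tuple T) (c : n.-tuple 'I_N) : {ffun T -> 'I_N} :=
  [ffun v => tnth c (insubd (enum_rank v) (index v s))].

Lemma mem_all_s (s : n.-tuple T) : uniq s -> forall v, v \in s.
Proof.
move=> Hu v.
have Hsub : {subset s <= enum T} by move=> x _; rewrite mem_enum.
have Hle : size (enum T) <= size s by rewrite size_tuple cardT.
have [_ E] := uniq_min_size Hu Hsub Hle.
by rewrite E mem_enum.
Qed.

Lemma kof_val (s : n.-tuple T) c v : uniq s -> val (kof s c v) = nth 0%N (map val c) (index v s).
Proof.
move=> Hu; rewrite ffunE.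
have Hi : index v s < n by rewrite -{2}(size_tuple s) index_mem mem_all_s.
set j := insubd _ _.
have Hj : val j = index v s by rewrite val_insubd Hi.
rewrite (tnth_nth (tnth c j)) (nth_map (tnth c j)) ?size_tuple //.
by rewrite Hj.
Qed.

Lemma s0_uniq k : uniq (s0 k).
Proof. by rewrite sort_uniq enum_uniq. Qed.

Lemma s0_perm k : perm_eq (s0 k) (enum T).
Proof. by rewrite /= perm_sort. Qed.

Lemma kof_s0 k : kof (s0 k) (map_tuple k (s0 k)) = k.
Proof.
apply/ffunP => v; apply/val_inj; rewrite kof_val ?s0_uniq //=.
have Hv : v \in s0 k by apply: mem_all_s; exact: s0_uniq.
by rewrite -map_comp (nth_map v) ?index_mem //= nth_index.
Qed.

Definition valid (p : n.-tuple T * n.-tuple 'I_N) :=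
  uniq p.1 && okcN (edgeN D p.1) (map val p.2).

Lemma edgeN_nth (s : n.-tuple T) j x0 : j.+1 < n ->
  edgeN D s j = D (nth x0 s j) (nth x0 s j.+1).
Proof.
move=> Hj; apply/existsP/idP.
  move=> [j0 /existsP[j1 /and3P[/eqP E0 /eqP E1 HD]]].
  by rewrite -E1 -E0 -!(tnth_nth x0).
move=> HD; exists (Ordinal (ltnW Hj)); apply/existsP; exists (Ordinal Hj).
by rewrite !eqxx /= !(tnth_nth x0).
Qed.

Lemma okc_mono (s : n.-tuple T) (c : n.-tuple 'I_N) i j :
  okcN (edgeN D s) (map val c) -> i <= j -> j < n ->
  nth 0%N (map val c) i <= nth 0%N (map val c) j.
Proof.
move=> Hok; elim: j => [|j IH]; first by rewrite leqn0 => /eqP ->.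
rewrite leq_eqVlt => /orP[/eqP -> //|Hij] Hj.
apply: leq_trans (IH Hij (ltnW Hj)) _.
have Hsz : j.+1 < size (map val c) by rewrite size_map size_tuple.
by have [] := okcNP _ _ Hok j Hsz.
Qed.

Lemma okc_chain (s : n.-tuple T) (c : n.-tuple 'I_N) x0 i j :
  okcN (edgeN D s) (map val c) -> i < j -> j < n ->
  nth 0%N (map val c) i = nth 0%N (map val c) j -> prec (nth x0 s j) (nth x0 s i).
Proof.
move=> Hok; elim: j => [//|j IH] Hij Hj Heq.
have Hsz : j.+1 < size (map val c) by rewrite size_map size_tuple.
have [Hle He] := okcNP _ _ Hok j Hsz.
have Hmono : nth 0%N (map val c) i <= nth 0%N (map val c) j.
  exact: (@okc_mono s c i j Hok Hij (ltnW Hj)).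
have Ejj : nth 0%N (map val c) j = nth 0%N (map val c) j.+1.
  by apply/eqP; rewrite eqn_leq Hle -Heq Hmono.
have HD := He Ejj; rewrite (edgeN_nth _ x0 Hj) /digraph_of in HD.
case: (eqVneq i j) => [->//|Hne].
have Hij' : i < j by rewrite ltn_neqAle Hne -ltnS.
apply: Htr HD _; apply: IH => //; first exact: ltnW.
by rewrite Ejj.
Qed.

Lemma valid_proper p : valid p -> proper_col G (kof p.1 p.2).
Proof.
case: p => s c /andP[Hu Hok] /=.
apply/forallP => u; apply/forallP => v; apply/implyP => /and3P[Huv Hnuv Hnvu].
apply/negP => /eqP Heq.
have : val (kof s c u) = val (kof s c v) by rewrite Heq.
rewrite !kof_val //.
have Hiu : index u s < n by rewrite -{2}(size_tuple s) index_mem mem_all_s.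
have Hiv : index v s < n by rewrite -{2}(size_tuple s) index_mem mem_all_s.
have Nu : nth u s (index u s) = u by rewrite nth_index // mem_all_s.
have Nv : nth u s (index v s) = v by rewrite nth_index // mem_all_s.
case: (ltngtP (index u s) (index v s)) => Hlt E.
- by move: (okc_chain u Hok Hlt Hiv E); rewrite Nu Nv (negbTE Hnvu).
- by move: (okc_chain u Hok Hlt Hiu (esym E)); rewrite Nu Nv (negbTE Hnuv).
- by move: Huv; rewrite -Nu Hlt Nv eqxx.
Qed.

Lemma valid_sorted p : valid p -> sorted (r (kof p.1 p.2)) p.1.
Proof.
case: p => s c /andP[Hu Hok] /=.
case Es : (tval s) => [|x0 t]; first by [].
rewrite -Es; apply/(sortedP x0) => j Hj; rewrite size_tuple in Hj.
set k := kof s c.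
have Hk : forall m, m < n -> val (k (nth x0 s m)) = nth 0%N (map val c) m.
  by move=> m Hm; rewrite kof_val // index_uniq ?size_tuple.
have Hsz : j.+1 < size (map val c) by rewrite size_map size_tuple.
have [Hle Heqe] := okcNP _ _ Hok j Hsz.
rewrite /r !Hk // ?(ltnW Hj) //.
move: Hle; rewrite leq_eqVlt => /orP[/eqP E|->//].
apply/orP; right; apply/andP; split.
  by apply/eqP/val_inj; rewrite !Hk ?E // ltnW.
have := Heqe E; rewrite (edgeN_nth _ x0 Hj) /digraph_of; exact: prec_asym.
Qed.

Lemma valid_s0 p : valid p -> s0 (kof p.1 p.2) = p.1.
Proof.
move=> Hv; have Hp := valid_proper Hv.
apply/val_inj => /=.
apply: (sorted_eq (r_trans Hp) (r_anti Hp)).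
- exact: sort_sorted (r_total Hp) _.
- exact: valid_sorted.
rewrite perm_sort; apply: uniq_perm; first exact: enum_uniq.
  by case/andP: Hv.
by move=> v; rewrite mem_enum mem_all_s //; case/andP: Hv.
Qed.

Lemma map_kof (s : n.-tuple T) c : uniq s -> map_tuple (kof s c) s = c.
Proof.
move=> Hu; apply/val_inj => /=; apply: (inj_map val_inj).
case Es : (tval s) => [|x0 t].
  by case: c => [[|? ?] Hc] //=; move: Hc; rewrite -(size_tuple s) Es.
rewrite -Es; apply: (@eq_from_nth _ 0%N); first by rewrite !size_map !size_tuple.
move=> i; rewrite !size_map size_tuple => Hi.
by rewrite -map_comp (nth_map x0) ?size_tuple // /= kof_val // index_uniq ?size_tuple.
Qed.

Lemma proper_valid k : proper_col G k -> valid (s0 k, map_tuple k (s0 k)).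
Proof.
move=> Hp; apply/andP; split; first exact: s0_uniq.
apply/okcNP => j; rewrite !size_map size_tuple => Hj.
have x0 : T := enum_val (Ordinal Hj).
have Hs := sort_sorted (r_total Hp) (enum T).
have /(sortedP x0) := Hs; move/(_ j); rewrite size_sort -cardT => /(_ Hj).
rewrite /= -map_comp !(nth_map x0) ?size_sort -?cardT ?(ltnW Hj) //=.
set u := nth x0 _ j; set v := nth x0 _ j.+1.
case/orP => [Hlt|/andP[/eqP Heq Hn]].
  by split; [exact: ltnW | move=> E; move: Hlt; rewrite E ltnn].
split; first by rewrite Heq.
move=> _; rewrite (edgeN_nth _ x0 Hj) /digraph_of.
have Huv : u != v.
  rewrite /u /v nth_uniq ?size_sort -?cardT ?(ltnW Hj) //.
    by rewrite ltn_eqF.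
  by rewrite sort_uniq enum_uniq.
by case/orP: (proper_cmp Hp Heq Huv) => H //; rewrite H in Hn.
Qed.

End S4.

Import GRing.Theory.
Open Scope ring_scope.

Section S5.
Variables (T : finType) (lab : T -> nat) (prec : rel T).
Hypothesis Hirr : irreflexive prec.
Hypothesis Htr : transitive prec.
Local Notation n := #|T|.
Local Notation D := (digraph_of prec).
Local Notation G := (incomp_graph prec).
Variable N : nat.

Lemma asc_eq (k : {ffun T -> 'I_N}) : proper_col G k ->
  asc_seq lab D (s0 prec k) = asc_col lab G k.
Proof.
move=> Hp; rewrite /asc_seq /asc_col; apply: eq_card => -[u v]; rewrite !inE /=.
case Hl: (lab u < lab v)%N; last by rewrite !andbF.
have Huv : u != v by apply/eqP => E; move: Hl; rewrite E ltnn.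
rewrite /= /digraph_of /incomp_graph Huv /=.
case Hc: (prec u v); case Hc': (prec v u) => //=.
- by move: (prec_asym Hirr Htr Hc); rewrite Hc'.
set s := s0 prec k.
have Hu : uniq s by apply: s0_uniq.
have Ms : forall w, w \in s by apply: mem_all_s.
have Hneq : k u != k v.
  by apply/eqP => E; move: (proper_cmp Hp E Huv); rewrite Hc Hc'.
have Hsort : sorted (r prec k) s by apply: sort_sorted (r_total Hirr Htr Hp) _.
have Hlt := sorted_ltn_nth (r_trans Htr Hp) u Hsort.
have Iu : (index u s < size s)%N by rewrite index_mem.
have Iv : (index v s < size s)%N by rewrite index_mem.
have Nu : nth u s (index u s) = u by rewrite nth_index.
have Nv : nth u s (index v s) = v by rewrite nth_index.
have Hk : (k u == k v :> nat) = false by apply/negbTE.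
apply/idP/idP.
  move=> Hi; have := Hlt _ _ Iu Iv Hi; rewrite Nu Nv /r.
  by case/orP => [//|/andP[/eqP E _]]; rewrite E eqxx in Hneq.
move=> Hkk; case: (ltngtP (index u s) (index v s)) => // [Hi|Hi].
  have := Hlt _ _ Iv Iu Hi; rewrite Nu Nv /r.
  case/orP => [H|/andP[/eqP E _]]; last by rewrite E eqxx in Hneq.
  by move: (ltn_trans H Hkk); rewrite ltnn.
by move: Huv; rewrite -Nu Hi Nv eqxx.
Qed.

Lemma prod_eq (k : {ffun T -> 'I_N}) :
  \prod_(x <- map_tuple k (s0 prec k)) ('X_x : {mpoly Zt[N]}) = \prod_v 'X_(k v).
Proof.
rewrite big_map (perm_big (enum T)) ?s0_perm //.
by rewrite big_enum /=; apply: eq_bigl => v; rewrite inE.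
Qed.

Lemma main_eq : XiD lab D N = chromX lab G N.
Proof.
rewrite /XiD /chromX.
set C := fun s : n.-tuple T => (('X : Zt) ^+ asc_seq lab D s)%:MP : {mpoly Zt[N]}.
set f := fun c : seq 'I_N => \prod_(x <- c) ('X_x : {mpoly Zt[N]}).
transitivity (\sum_(s : n.-tuple T | uniq s) \sum_(c : n.-tuple 'I_N | okcN (edgeN D s) (map val c)) C s * f c).
  apply: eq_bigr => s _.
  rewrite -big_distrr /= -(step2 D N s) big_distrr /=.
  by apply: eq_bigr => l _; rewrite big_distrr.
rewrite pair_big_dep.
rewrite (reindex (fun k : {ffun T -> 'I_N} => (s0 prec k, map_tuple k (s0 prec k)))) /=.
  apply: eq_big => k.
    apply/idP/idP => H.
      by have := valid_proper Htr (p := (s0 prec k, map_tuple k (s0 prec k))) H; rewrite /= kof_s0.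
    exact: proper_valid.
  move=> Hp; rewrite -(prod_eq k) -asc_eq //.
  by have := valid_proper Htr (p := (s0 prec k, map_tuple k (s0 prec k))) Hp; rewrite /= kof_s0.
exists (fun p : n.-tuple T * n.-tuple 'I_N => kof p.1 p.2).
  by move=> k _; exact: kof_s0.
move=> p Hp.
rewrite inE in Hp.
have E := valid_s0 Hirr Htr Hp.
by rewrite E map_kof //; case: p Hp E => [s c] /= /andP[].
Qed.
End S5.

Close Scope ring_scope.

Theorem proposition3p5 (T : finType) (lab : T -> nat) (prec : rel T) :
  injective lab -> (forall v, (0 < lab v)%N) ->
  irreflexive prec -> transitive prec ->
  forall N : nat,
    XiD lab (digraph_of prec) N = chromX lab (incomp_graph prec) N.
Proof.
move=> _ _ Hirr Htr N.
exact: main_eq.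
Qed.
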